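(* Under the hypotheses that $(\mathcal G_A,p^A)$ and $(\mathcal G_B,p^B)$ are CPS's on the finite set $\Omega$ (satisfying the standing assumptions), each satisfying certainty reflection and being $1$-closed, and for any fixed event $E$ and $q_A,q_B\in[0,1]$: if $\omega\in C^\infty$, then $m(\omega)\subseteq C^\infty$.
   Context: $\Omega$ is a finite set; every subset is an event. A CPS is a pair $(\mathcal G,p)$ where $\mathcal G$ is a family of nonempty subsets of $\Omega$ and $p$ assigns to each $G\in\mathcal G$ a probability measure $p_G$ on $\Omega$ with $p_G(G)=1$ and $p_G(E)=p_G(F)p_F(E)$ whenever $E\subseteq F\subseteq G$, $F,G\in\mathcal G$. Standing assumption: each conditioning family is closed under unions and nonempty intersections and covers $\Omega$. Atom: $m_i(\omega)=\bigcap\{G\in\mathcal G_i:\omega\in G\}$; $m(\omega)=\bigcap\{G\in\mathcal G_A\cap\mathcal G_B:\omega\in G\}$. $(\mathcal G_i,p^i)$ is $1$-closed if every $L\subseteq G$ with $G\in\mathcal G_i$ and $p^i_G(L)=1$ belongs to $\mathcal G_i$. Certainty reflection: for every event $E$, $q\in[0,1]$, $\omega$: $p^i_{m_i(\omega)}(E)=q$ implies $p^i_{m_i(\omega)}(\{\omega':p^i_{m_i(\omega')}(E)=q\})=1$. $C_i(F)=\{\omega:p^i_{m_i(\omega)}(F)=1\}$. $A^0=\{\omega:p^A_{m_A(\omega)}(E)=q_A\}$, $B^0=\{\omega:p^B_{m_B(\omega)}(E)=q_B\}$, $A^{n+1}=A^n\cap C_A(B^n)$, $B^{n+1}=B^n\cap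 C_B(A^n)$, $C^\infty=\bigcap_{n\ge0}A^n\cap\bigcap_{n\ge0}B^n$. *)

(* Defs.v *)
(* Omega is a finite type T; events are {set T};
   probabilities take values in an arbitrary real field R. *)
From mathcomp Require Import all_boot all_order all_algebra.
Set Implicit Arguments. Unset Strict Implicit. Unset Printing Implicit Defensive.
Import Order.TTheory GRing.Theory Num.Theory.
Local Open Scope ring_scope.

Section CPS.
Variables (T : finType) (R : realFieldType).

(* A conditional system is given by a family Gs of conditioning events and,
   for each G, a point-mass function P G : T -> R; p_G(E) = prob P G E. *)
Definition prob (P : {set T} -> T -> R) (G E : {set T}) : R :=
  \sum_(x in E) P G x.

Definition is_CPS (Gs : {set {set T}}) (P : {set T} -> T -> R) : Prop :=
  (forall G, G \in Gs -> G != set0) /\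
  (forall G, G \in Gs ->
     (forall x, 0 <= P G x) /\ \sum_x P G x = 1 /\ prob P G G = 1) /\
  (forall E F G : {set T}, F \in Gs -> G \in Gs -> E \subset F -> F \subset G ->
     prob P G E = prob P G F * prob P F E).

Definition standing (Gs : {set {set T}}) : Prop :=
  (forall G1 G2, G1 \in Gs -> G2 \in Gs -> G1 :|: G2 \in Gs) /\
  (forall G1 G2, G1 \in Gs -> G2 \in Gs -> G1 :&: G2 != set0 ->
     G1 :&: G2 \in Gs) /\
  (forall w : T, exists2 G, G \in Gs & w \in G).

Definition atom (Gs : {set {set T}}) (w : T) : {set T} :=
  \bigcap_(G in Gs | w \in G) G.

Definition one_closed (Gs : {set {set T}}) (P : {set T} -> T -> R) : Prop :=
  forall G L : {set T}, G \in Gs -> L \subset G -> prob P G L = 1 -> L \in Gs.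

Definition certainty_reflection (Gs : {set {set T}}) (P : {set T} -> T -> R)
  : Prop :=
  forall (E : {set T}) (q : R) (w : T), 0 <= q <= 1 ->
    prob P (atom Gs w) E = q ->
    prob P (atom Gs w) [set w' | prob P (atom Gs w') E == q] = 1.

Definition certain (Gs : {set {set T}}) (P : {set T} -> T -> R) (F : {set T})
  : {set T} := [set w | prob P (atom Gs w) F == 1].

Fixpoint ABseq (GA GB : {set {set T}}) (PA PB : {set T} -> T -> R)
    (E : {set T}) (qA qB : R) (n : nat) : {set T} * {set T} :=
  match n with
  | 0 => ([set w | prob PA (atom GA w) E == qA],
          [set w | prob PB (atom GB w) E == qB])
  | n'.+1 =>
      let ab := ABseq GA GB PA PB E qA qB n' in
      (ab.1 :&: certain GA PA ab.2, ab.2 :&: certain GB PB ab.1)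
  end.

Definition in_Cinf (GA GB : {set {set T}}) (PA PB : {set T} -> T -> R)
    (E : {set T}) (qA qB : R) (w : T) : Prop :=
  forall n, w \in (ABseq GA GB PA PB E qA qB n).1 /\
            w \in (ABseq GA GB PA PB E qA qB n).2.

End CPS.

(* Main.v *)
Require Import Defs.
From mathcomp Require Import all_boot all_order all_algebra.
From mathcomp Require Import lra zify.
Import Order.TTheory GRing.Theory Num.Theory.
Local Open Scope ring_scope.

Section L.
Variables (T : finType) (R : realFieldType).
Implicit Types (Gs : {set {set T}}) (P : {set T} -> T -> R).

Lemma prob1P P G (X : {set T}) : (forall x, 0 <= P G x) -> \sum_x P G x = 1 ->
  (prob P G X = 1 <-> forall x, x \notin X -> P G x = 0).
Proof.
move=> h0 h1; rewrite /prob.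
have e : \sum_x P G x = \sum_(x in X) P G x + \sum_(x | x \notin X) P G x.
  by rewrite (bigID (mem X)) /=.
split.
- move=> hX; have s0 : \sum_(x | x \notin X) P G x = 0 by lra.
  by apply: psumr_eq0P s0 => i _.
- move=> hz; have s0 : \sum_(x | x \notin X) P G x = 0 by apply: big1.
  lra.
Qed.

Lemma prob1I P G (X Y : {set T}) : (forall x, 0 <= P G x) -> \sum_x P G x = 1 ->
  prob P G X = 1 -> prob P G Y = 1 -> prob P G (X :&: Y) = 1.
Proof.
move=> h0 h1 /(prob1P _ _ X h0 h1) hX /(prob1P _ _ Y h0 h1) hY.
apply/(prob1P _ _ _ h0 h1) => x; rewrite inE negb_and => /orP[]; [exact: hX|exact: hY].
Qed.

Lemma atom_mem Gs w : w \in atom Gs w.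
Proof. by apply/bigcapP => G /andP[]. Qed.

Lemma atom_in Gs w : standing Gs -> atom Gs w \in Gs.
Proof.
case=> hU [hI hC]; have [G0 G0in wG0] := hC w.
have : (w \in atom Gs w) && ((atom Gs w == setT) || (atom Gs w \in Gs)).
  rewrite /atom; apply: (big_ind (fun X : {set T} => is_true ((w \in X) && ((X == setT) || (X \in Gs))))).
  - by rewrite in_setT eqxx.
  - move=> X Y /andP[wX hX] /andP[wY hY]; rewrite inE wX wY /=.
    case/orP: hX => [/eqP->|XG]; first by rewrite setTI hY.
    case/orP: hY => [/eqP->|YG]; first by rewrite setIT XG orbT.
    apply/orP; right; apply: hI => //; apply/set0Pn; exists w; by rewrite inE wX wY.
  - by move=> G /andP[GG wG]; rewrite wG GG orbT.
case/andP=> _ /orP[/eqP hT|//].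
have : atom Gs w \subset G0 by apply: bigcap_inf; rewrite G0in wG0.
by rewrite hT subTset => /eqP G0T; rewrite -G0T.
Qed.

Lemma cps_at Gs P w : is_CPS Gs P -> standing Gs ->
  (forall x, 0 <= P (atom Gs w) x) /\ \sum_x P (atom Gs w) x = 1 /\
  prob P (atom Gs w) (atom Gs w) = 1.
Proof. by case=> _ [h _] hS; apply: h; apply: atom_in. Qed.

Lemma self_prob Gs P (E : {set T}) q (S U : nat -> {set T}) :
  is_CPS Gs P -> standing Gs -> certainty_reflection Gs P -> 0 <= q <= 1 ->
  S 0%N = [set w | prob P (atom Gs w) E == q] ->
  (forall n, S n.+1 = S n :&: certain Gs P (U n)) ->
  forall n x, x \in S n -> prob P (atom Gs x) (S n) = 1.
Proof.
move=> hP hS hCR hq S0 SS; elim=> [|n IH] x.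
  by rewrite S0 inE => /eqP h; exact: (hCR E q x hq h).
have [h0 [h1 _]] := cps_at _ _ x hP hS.
rewrite SS inE => /andP[xS]; rewrite /certain inE => /eqP xC.
apply: prob1I => //; first exact: IH.
by apply: hCR => //; rewrite ler01 lexx.
Qed.

Lemma in_Gs_of Gs P (D : {set T}) : is_CPS Gs P -> standing Gs -> one_closed Gs P ->
  (forall x, x \in D -> prob P (atom Gs x) D = 1) -> D != set0 -> D \in Gs.
Proof.
move=> hP hS h1 hD D0.
have eD : \bigcup_(x in D) (atom Gs x :&: D) = D.
  apply/setP=> y; apply/bigcupP/idP => [[x _ ]|yD]; first by rewrite inE => /andP[].
  by exists y => //; rewrite inE atom_mem.
have : (\bigcup_(x in D) (atom Gs x :&: D) == set0) ||
       (\bigcup_(x in D) (atom Gs x :&: D) \in Gs).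
  apply: (big_ind (fun X : {set T} => is_true ((X == set0) || (X \in Gs)))).
  - by rewrite eqxx.
  - move=> X Y /orP[/eqP->|XG] /orP[/eqP->|YG];
      rewrite ?set0U ?setU0 ?eqxx ?XG ?YG ?orbT //.
    by case: hS => hU _; rewrite hU ?orbT.
  - move=> x xD; apply/orP; right; apply: (h1 (atom Gs x)).
    + exact: atom_in.
    + exact: subsetIl.
    + have [h0 [h1' h2]] := cps_at _ _ x hP hS.
      by apply: prob1I => //; apply: hD.
by rewrite eD (negPf D0).
Qed.

End L.

Theorem lemma4 (T : finType) (R : realFieldType)
    (GA GB : {set {set T}}) (PA PB : {set T} -> T -> R)
    (E : {set T}) (qA qB : R) :
  is_CPS GA PA -> standing GA -> certainty_reflection GA PA -> one_closed GA PA ->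
  is_CPS GB PB -> standing GB -> certainty_reflection GB PB -> one_closed GB PB ->
  0 <= qA <= 1 -> 0 <= qB <= 1 ->
  forall w : T, in_Cinf GA GB PA PB E qA qB w ->
  forall w', w' \in atom (GA :&: GB) w -> in_Cinf GA GB PA PB E qA qB w'.
Proof.
move=> hPA hSA hCA h1A hPB hSB hCB h1B hqA hqB w hw w' hw'.
set ab := ABseq GA GB PA PB E qA qB.
have abS m : ab m.+1 = ((ab m).1 :&: certain GA PA (ab m).2,
                       (ab m).2 :&: certain GB PB (ab m).1) by [].
pose f n := (#|(ab n).1| + #|(ab n).2|)%N.
have fle n : (f n.+1 <= f n)%N.
  by rewrite /f abS /= leq_add // subset_leq_card // subsetIl.
have flt n : ab n.+1 != ab n -> (f n.+1 < f n)%N.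
  rewrite /f abS; case: (ab n) => a b /=.
  rewrite xpair_eqE negb_and => /orP[h|h].
  - have : (#|a :&: certain GA PA b| < #|a|)%N.
      by apply: proper_card; rewrite properEneq h subsetIl.
    have : (#|b :&: certain GB PB a| <= #|b|)%N by apply/subset_leq_card/subsetIl.
    lia.
  - have : (#|b :&: certain GB PB a| < #|b|)%N.
      by apply: proper_card; rewrite properEneq h subsetIl.
    have : (#|a :&: certain GA PA b| <= #|a|)%N by apply/subset_leq_card/subsetIl.
    lia.
have [N hN] : exists N, ab N.+1 = ab N.
  case: (boolP [exists k : 'I_(f 0%N).+1, ab k.+1 == ab k]) =>
    [/existsP[k /eqP hk]|hne]; first by exists k.
  have key n : (n <= (f 0%N).+1)%N -> (f n + n <= f 0%N)%N.
    elim: n => [|n IHn] hn; first by rewrite addn0.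
    have hk : ab n.+1 != ab n.
      apply/negP => he; move/negP: hne; apply; apply/existsP.
      by exists (Ordinal hn).
    have := flt n hk; have := IHn (ltnW hn); lia.
  have := key _ (leqnn _); lia.
have stab m : (N <= m)%N -> ab m = ab N.
  elim: m => [|m IHm]; first by rewrite leqn0 => /eqP->.
  rewrite leq_eqVlt => /orP[/eqP<-//|hm].
  transitivity (ab N.+1); last exact hN.
  by rewrite abS IHm.
have mono k m : (ab (m + k)%N).1 \subset (ab m).1 /\ (ab (m + k)%N).2 \subset (ab m).2.
  elim: k => [|k [IH1 IH2]]; first by rewrite addn0 !subxx.
  rewrite addnS abS /=; split.
  - exact: subset_trans (subsetIl _ _) IH1.
  - exact: subset_trans (subsetIl _ _) IH2.
set D := (ab N).1 :&: (ab N).2.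
have wD : w \in D by have [h1 h2] := hw N; rewrite inE h1 h2.
have selfA : forall n x, x \in (ab n).1 -> prob PA (atom GA x) (ab n).1 = 1.
  exact: (@self_prob T R GA PA E qA (fun n => (ab n).1) (fun n => (ab n).2) hPA hSA hCA hqA (erefl _) (fun _ => erefl _)).
have selfB : forall n x, x \in (ab n).2 -> prob PB (atom GB x) (ab n).2 = 1.
  exact: (@self_prob T R GB PB E qB (fun n => (ab n).2) (fun n => (ab n).1) hPB hSB hCB hqB (erefl _) (fun _ => erefl _)).
have DA : D \in GA.
  apply: (@in_Gs_of T R GA PA D hPA hSA h1A); last by apply/set0Pn; exists w.
  move=> x; rewrite inE => /andP[xa xb].
  have [h0 [h1 _]] := @cps_at T R GA PA x hPA hSA.
  apply: prob1I => //; first exact: selfA.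
  by move: xa; rewrite -{1}hN abS inE => /andP[_]; rewrite /certain inE => /eqP.
have DB : D \in GB.
  apply: (@in_Gs_of T R GB PB D hPB hSB h1B); last by apply/set0Pn; exists w.
  move=> x; rewrite inE => /andP[xa xb].
  have [h0 [h1 _]] := @cps_at T R GB PB x hPB hSB.
  apply: prob1I => //; last exact: selfB.
  by move: xb; rewrite -{1}hN abS inE => /andP[_]; rewrite /certain inE => /eqP.
have sub : atom (GA :&: GB) w \subset D by apply: bigcap_inf; rewrite inE DA DB wD.
have := subsetP sub _ hw'; rewrite inE => /andP[w'a w'b].
rewrite /in_Cinf -/ab; move=> n; case: (leqP n N) => hn.
- have [m1 m2] := mono (N - n)%N n; rewrite subnKC // in m1 m2.
  by split; [exact: (subsetP m1) | exact: (subsetP m2)].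
- by rewrite stab ?(ltnW hn).
Qed.
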